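(* Let $n\ge2$, let $R=\Bbbk\langle u,d\mid d^2u+ud^2,\ du^2+u^2d\rangle$, let $\xi$ be a primitive $n$-th root of unity and let $G=\mathbb Z_n=\langle g\rangle$ act on $R$ by $g(u)=\xi u$, $g(d)=\xi^{-1}d$. In $R\#\Bbbk G$ let $f_i=\frac1n\sum_{j=0}^{n-1}\xi^{ij}\#g^j$, $f=f_0+\dots+f_{n-1}$ and $B=f(R\#\Bbbk G)f$. Let $\beta\in\Bbbk^n$ with $\beta_i=-1$ for all $i$. Then $B\cong\mathcal H(0,\beta,0)$, via $e_i\mapsto f_i$, $u_i\mapsto f_i(u\#f)$, $d_i\mapsto (d\#f)f_i$.
   Context: $\Bbbk$ is an algebraically closed field of characteristic zero. The skew group algebra $R\#\Bbbk G$ is $R\otimes\Bbbk G$ with $(r\#g)(s\#h)=rg(s)\#gh$. Indices are mod $n$, $Q_0=\{0,\dots,n-1\}$; $Q$ is the quiver with vertices $Q_0$ and arrows $u_i:i\to i+1$, $d_i:i+1\to i$; paths are written left to right, $e_i$ is the trivial path at $i$. For $\alpha,\beta\in\Bbbk^n$, $\mathcal H(\alpha,\beta,0)$ is $\Bbbk Q$ modulo the relations $d_{i-1}u_{i-1}u_i=\alpha_iu_id_iu_i+\beta_iu_iu_{i+1}d_{i+1}$ and $d_id_{i-1}u_{i-1}=\alpha_id_iu_id_i+\beta_iu_{i+1}d_{i+1}d_i$ for all $i\in Q_0$. *)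

(* Defs.v *)
From HB Require Import structures.
From mathcomp Require Import all_boot all_order all_algebra.
Set Implicit Arguments. Unset Strict Implicit. Unset Printing Implicit Defensive.
Import Order.TTheory GRing.Theory Num.Theory.
Local Open Scope ring_scope.

Section Defs.
Variable K : fieldType.

Definition R_rels (A : algType K) (u d : A) : Prop :=
  d * d * u + u * d * d = 0 /\ d * u * u + u * u * d = 0.

Definition presents_R (R : algType K) (u d : R) : Prop :=
  R_rels u d /\
  forall (A : algType K) (a b : A), R_rels a b ->
    (exists phi : {lrmorphism R -> A}, phi u = a /\ phi d = b) /\
    (forall phi psi : {lrmorphism R -> A},
        phi u = a -> phi d = b -> psi u = a -> psi d = b -> phi =1 psi).

Variable n : nat.
(* vertices Q_0 = 'I_n, i+1 = ordS i, i-1 = ord_pred i (mod n);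
   u_i : i -> i+1, d_i : i+1 -> i; paths written left to right, so the
   path p followed by q is the product p * q. *)
Definition H_rels (A : algType K) (alpha beta : 'I_n -> K)
    (E U D : 'I_n -> A) : Prop :=
  [/\ (forall i j, E i * E j = if i == j then E i else 0),
      \sum_(i < n) E i = 1,
      (forall i, U i = E i * U i * E (ordS i)),
      (forall i, D i = E (ordS i) * D i * E i) &
      (forall i,
        D (ord_pred i) * U (ord_pred i) * U i
          = alpha i *: (U i * D i * U i) + beta i *: (U i * U (ordS i) * D (ordS i))
       /\ D i * D (ord_pred i) * U (ord_pred i)
          = alpha i *: (D i * U i * D i) + beta i *: (U (ordS i) * D (ordS i) * D i))].

Definition presents_H (H : algType K) (alpha beta : 'I_n -> K)
    (e u d : 'I_n -> H) : Prop :=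
  H_rels alpha beta e u d /\
  forall (A : algType K) (E U D : 'I_n -> A), H_rels alpha beta E U D ->
    (exists phi : {lrmorphism H -> A},
        forall i, [/\ phi (e i) = E i, phi (u i) = U i & phi (d i) = D i]) /\
    (forall phi psi : {lrmorphism H -> A},
        (forall i, [/\ phi (e i) = E i, phi (u i) = U i & phi (d i) = D i]) ->
        (forall i, [/\ psi (e i) = E i, psi (u i) = U i & psi (d i) = D i]) ->
        phi =1 psi).

(* An element x : {ffun 'I_n -> R} stands for  \sum_j x j # g^j. *)
Variable R : algType K.
Variable sigma : R -> R.  (* action of the generator g *)

Definition skew_mul (x y : {ffun 'I_n -> R}) : {ffun 'I_n -> R} :=
  [ffun k : 'I_n => \sum_(a < n) \sum_(b < n | ((a + b) %% n)%N == k)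
                      x a * iter a sigma (y b)].

Definition skew_of (r : R) : {ffun 'I_n -> R} :=
  [ffun j : 'I_n => if val j == 0%N then r else 0].

(* r # h  =  (r # 1)(1 # h)  for h in K Z_n (viewed inside R # K Z_n) *)
Definition skew_tens (r : R) (h : {ffun 'I_n -> R}) := skew_mul (skew_of r) h.

Variable xi : K.
Definition fidem (i : 'I_n) : {ffun 'I_n -> R} :=
  [ffun j : 'I_n => ((n%:R)^-1 * xi ^+ (i * j)) *: (1 : R)].
Definition fsum : {ffun 'I_n -> R} := \sum_(i < n) fidem i.

Definition inB (x : {ffun 'I_n -> R}) : Prop :=
  exists y, x = skew_mul fsum (skew_mul y fsum).
End Defs.

(* Main.v *)
Require Import Defs.
From HB Require Import structures.
From mathcomp Require Import all_boot all_order all_algebra.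
From mathcomp Require Import ring.
Set Implicit Arguments. Unset Strict Implicit. Unset Printing Implicit Defensive.
Import Order.TTheory GRing.Theory Num.Theory.
Local Open Scope ring_scope.

Section Skew.
Variables (K : fieldType) (p : nat) (R : algType K) (s : {lrmorphism R -> R}).
Hypothesis s_n : forall r, iter p.+2 s r = r.
Local Notation N := p.+2.
Local Notation I := 'I_p.+2.

Lemma iter_sum k (J : finType) (F : J -> R) :
  iter k s (\sum_j F j) = \sum_j iter k s (F j).
Proof. by elim: k => //= k ->; rewrite rmorph_sum. Qed.
Lemma iterDr k (x y : R) : iter k s (x + y) = iter k s x + iter k s y.
Proof. by elim: k => //= k ->; rewrite rmorphD. Qed.
Lemma iterMr k (x y : R) : iter k s (x * y) = iter k s x * iter k s y.
Proof. by elim: k => //= k ->; rewrite rmorphM. Qed.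
Lemma iterZr k (c : K) (x : R) : iter k s (c *: x) = c *: iter k s x.
Proof. by elim: k => //= k ->; rewrite linearZ. Qed.
Lemma iter1r k : iter k s 1 = 1.
Proof. by elim: k => //= k ->; rewrite rmorph1. Qed.
Lemma iter0r k : iter k s 0 = 0.
Proof. by elim: k => //= k ->; rewrite raddf0. Qed.

Lemma iter_mulN q r : iter (q * N) s r = r.
Proof. by elim: q => // q IH; rewrite mulSn iterD IH s_n. Qed.
Lemma iter_mod m r : iter m s r = iter (m %% N) s r.
Proof. by rewrite {1}(divn_eq m N) addnC iterD iter_mulN. Qed.
Lemma iter_addZ (a b : I) r : iter (a + b)%R s r = iter a s (iter b s r).
Proof. by rewrite /= -iter_mod iterD. Qed.

Definition SK : Type := (fun _ : (forall r, iter N s r = r) => {ffun I -> R}) s_n.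
HB.instance Definition _ := GRing.Lmodule.on SK.

Definition smul (x y : SK) : SK := @skew_mul K N R s x y.
Definition sone : SK := @skew_of K N R 1.

Lemma smulE (x y : SK) k : smul x y k = \sum_(a < N) x a * iter a s (y (k - a)).
Proof.
rewrite /smul /skew_mul ffunE; apply: eq_bigr => a _.
rewrite (big_pred1 (k - a)) // => b /=.
have -> : ((a + b) %% N)%N = val (a + b : I)%R by [].
apply/eqP/eqP => [h|->]; last by rewrite addrC subrK.
have {}h : (a + b)%R = k by apply: val_inj.
by rewrite -h addrC addKr.
Qed.

Lemma smulA : associative smul.
Proof.
move=> x y z; apply/ffunP => k; rewrite !smulE.
symmetry; under eq_bigr => c _ do rewrite smulE mulr_suml.
rewrite exchange_big /=; apply: eq_bigr => a _.
rewrite smulE iter_sum mulr_sumr (reindex_inj (addrI a)) /=.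
apply: eq_bigr => b _.
by rewrite iterMr mulrA iter_addZ addrC addKr opprD addrA.
Qed.

Lemma sone0 (a : I) : sone a = if a == 0 then 1 else 0.
Proof. by rewrite /sone /skew_of ffunE. Qed.

Lemma smul1r : left_id sone smul.
Proof.
move=> x; apply/ffunP => k; rewrite smulE (bigD1 ord0) //= big1 => [|a a0].
  by rewrite sone0 eqxx mul1r subr0 addr0.
by rewrite sone0 (negbTE a0) mul0r.
Qed.

Lemma smulr1 : right_id sone smul.
Proof.
move=> x; apply/ffunP => k; rewrite smulE (bigD1 k) //= big1 => [|a ak].
  by rewrite subrr sone0 eqxx iter1r mulr1 addr0.
by rewrite sone0 subr_eq0 eq_sym (negbTE ak) iter0r mulr0.
Qed.

Lemma smulDl : left_distributive smul +%R.
Proof.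
move=> x y z; apply/ffunP => k; rewrite !smulE ffunE !smulE -big_split /=.
by apply: eq_bigr => a _; rewrite ffunE mulrDl.
Qed.

Lemma smulDr : right_distributive smul +%R.
Proof.
move=> x y z; apply/ffunP => k; rewrite !smulE ffunE !smulE -big_split /=.
by apply: eq_bigr => a _; rewrite ffunE iterDr mulrDr.
Qed.

Lemma sone_neq0 : sone != 0.
Proof.
apply/eqP => /ffunP /(_ ord0); rewrite sone0 eqxx ffunE => /eqP.
by rewrite oner_eq0.
Qed.

HB.instance Definition _ := GRing.Zmodule_isNzRing.Build SK
  smulA smul1r smulr1 smulDl smulDr sone_neq0.

Lemma sscalerAl (c : K) (x y : SK) : c *: (x * y) = (c *: x) * y.
Proof.
apply/ffunP => k; rewrite ffunE /GRing.mul /= !smulE scaler_sumr.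
by apply: eq_bigr => a _; rewrite ffunE scalerAl.
Qed.
HB.instance Definition _ := GRing.Lmodule_isLalgebra.Build K SK sscalerAl.
Lemma sscalerAr (c : K) (x y : SK) : c *: (x * y) = x * (c *: y).
Proof.
apply/ffunP => k; rewrite ffunE /GRing.mul /= !smulE scaler_sumr.
by apply: eq_bigr => a _; rewrite ffunE iterZr scalerAr.
Qed.
HB.instance Definition _ := GRing.Lalgebra_isAlgebra.Build K SK sscalerAr.

Lemma SKmulE (x y : SK) : x * y = @skew_mul K N R s x y.
Proof. by []. Qed.
Lemma SKoneE : (1 : SK) = @skew_of K N R 1.
Proof. by []. Qed.

Lemma mulSKE (x y : SK) k : (x * y) k = \sum_(a < N) x a * iter a s (y (k - a)).
Proof. exact: smulE. Qed.
Lemma oneSKE (k : I) : (1 : SK) k = if k == 0 then 1 else 0.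
Proof. exact: sone0. Qed.
End Skew.

Section IterM.
Variables (K : fieldType) (R : algType K) (s : {lrmorphism R -> R}) (k : nat).
Definition iterf (r : R) := iter k s r.
Lemma iterf_mm : monoid_morphism iterf.
Proof.
split; first by rewrite /iterf; elim: k => //= m ->; rewrite rmorph1.
by move=> x y; rewrite /iterf; elim: k => //= m ->; rewrite rmorphM.
Qed.
Lemma iterf_lin : linear iterf.
Proof. by move=> c x y; rewrite /iterf; elim: k => //= m ->; rewrite linearP. Qed.
End IterM.
Definition iterfL (K : fieldType) (R : algType K) (s : {lrmorphism R -> R}) k : {lrmorphism R -> R} :=
  HB.pack (iterf s k) (GRing.isMonoidMorphism.Build _ _ _ (iterf_mm s k))
    (GRing.isLinear.Build K R R *:%R _ (iterf_lin s k)).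
Lemma iterfLE (K : fieldType) (R : algType K) (s : {lrmorphism R -> R}) k r : iterfL s k r = iter k s r.
Proof. by []. Qed.

Section ConjM.
Variables (K : fieldType) (A : algType K) (a b : A).
Hypotheses (hab : a * b = 1) (hba : b * a = 1).
Definition conjf (x : A) := a * x * b.
Lemma conjf_mm : monoid_morphism conjf.
Proof.
split; first by rewrite /conjf mulr1.
by move=> x y; rewrite /conjf !mulrA -(mulrA _ b a) hba mulr1.
Qed.
Lemma conjf_lin : linear conjf.
Proof. by move=> c x y; rewrite /conjf mulrDr mulrDl -scalerAr -scalerAl. Qed.
Definition conjfL : {lrmorphism A -> A} :=
  HB.pack conjf (GRing.isMonoidMorphism.Build _ _ _ conjf_mm)
    (GRing.isLinear.Build K A A *:%R _ conjf_lin).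
Lemma conjfLE x : conjfL x = a * x * b. Proof. by []. Qed.
End ConjM.


Section CompM.
Variables (K : fieldType) (A B C : algType K) (f : {lrmorphism B -> C}) (h : {lrmorphism A -> B}).
Definition compf (x : A) := f (h x).
Lemma compf_mm : monoid_morphism compf.
Proof. by split; [rewrite /compf !rmorph1 | move=> x y; rewrite /compf !rmorphM]. Qed.
Lemma compf_lin : linear compf.
Proof. by move=> c x y; rewrite /compf !linearP. Qed.
Definition compL : {lrmorphism A -> C} :=
  HB.pack compf (GRing.isMonoidMorphism.Build _ _ _ compf_mm)
    (GRing.isLinear.Build K A C *:%R _ compf_lin).
Lemma compLE x : compL x = f (h x). Proof. by []. Qed.
End CompM.

Section IdM.
Variables (K : fieldType) (A : algType K).
Definition idf (x : A) := x.
Lemma idf_mm : monoid_morphism idf. Proof. by []. Qed.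
Lemma idf_lin : linear idf. Proof. by []. Qed.
Definition idL : {lrmorphism A -> A} :=
  HB.pack idf (GRing.isMonoidMorphism.Build _ _ _ idf_mm)
    (GRing.isLinear.Build K A A *:%R _ idf_lin).
Lemma idLE x : idL x = x. Proof. by []. Qed.
End IdM.

Lemma rels_morph (K : fieldType) (A B : algType K) (h : {lrmorphism A -> B}) (a b : A) :
  R_rels a b -> R_rels (h a) (h b).
Proof. by case=> h1 h2; split; rewrite -!rmorphM -rmorphD ?h1 ?h2 rmorph0. Qed.
Section SofM.
Variables (K : fieldType) (p : nat) (R : algType K) (s : {lrmorphism R -> R}).
Hypothesis s_n : forall r, iter p.+2 s r = r.
Local Notation N := p.+2.
Local Notation I := 'I_p.+2.
Local Notation SKT := (@SK K p R s s_n).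

Definition sof (r : R) : SKT := @skew_of K N R r.
Lemma sofE r (k : I) : sof r k = if k == 0 then r else 0.
Proof. by rewrite /sof /skew_of ffunE. Qed.

Lemma sof_mull r (x : SKT) k : (sof r * x) k = r * x k.
Proof.
rewrite mulSKE (bigD1 ord0) //= big1 => [|a a0]; first by rewrite sofE eqxx subr0 addr0.
by rewrite sofE (negbTE a0) mul0r.
Qed.

Lemma sof_mm : monoid_morphism sof.
Proof.
split=> // x y; apply/ffunP => k; rewrite sof_mull /sof /skew_of !ffunE.
by case: (_ == _); rewrite ?mulr0.
Qed.
Lemma sof_lin : linear sof.
Proof. by move=> a x y; apply/ffunP => k; rewrite /sof /skew_of !ffunE; case: (_ == _); rewrite ?scaler0 ?addr0. Qed.
Definition sofL : {lrmorphism R -> SKT} :=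
  HB.pack sof (GRing.isMonoidMorphism.Build _ _ _ sof_mm)
    (GRing.isLinear.Build K R SKT *:%R _ sof_lin).
Lemma sofLE r : sofL r = sof r. Proof. by []. Qed.

Definition delta (j : I) : SKT := [ffun k : I => if k == j then 1 else 0].
Definition dl := delta 1.

Lemma subsub (k j : I) : k - (k - j) = j.
Proof. by rewrite opprB addrC subrK. Qed.

Lemma mul_dl (x : SKT) k : (x * dl) k = x (k - 1).
Proof.
rewrite mulSKE (bigD1 (k - 1)) //= big1 => [|a ak].
  by rewrite /dl /delta ffunE subsub eqxx iter1r mulr1 addr0.
rewrite /dl /delta ffunE; case: eqP => [h|]; last by rewrite iter0r mulr0.
by case/eqP: ak; rewrite -h subsub.
Qed.

Lemma dl_exp m : dl ^+ m = delta (m%:R).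
Proof.
elim: m => [|m IH]; first by apply/ffunP => k; rewrite ?oneSKE /delta ?ffunE.
apply/ffunP => k; rewrite exprSr mul_dl IH /delta !ffunE mulrSr.
by rewrite subr_eq.
Qed.

Lemma dl_expI (j : I) : dl ^+ j = delta j.
Proof. by rewrite dl_exp natr_Zp. Qed.

Lemma SK_dec (x : SKT) : x = \sum_(j < N) sof (x j) * dl ^+ j.
Proof.
apply/ffunP => k; rewrite sum_ffunE (bigD1 k) //= big1 => [|a ak].
  by rewrite sof_mull dl_expI /delta ffunE eqxx mulr1 addr0.
by rewrite sof_mull dl_expI /delta ffunE eq_sym (negbTE ak) mulr0.
Qed.

Lemma iter_eig (r : R) (c : K) k : s r = c *: r -> iter k s r = c ^+ k *: r.
Proof.
move=> h; elim: k => [|k IH] /=; first by rewrite scale1r.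
by rewrite IH linearZ /= h scalerA exprSr.
Qed.

Lemma Zexp (z : K) (a b : I) : z ^+ N = 1 -> z ^+ (a + b)%R = z ^+ a * z ^+ b.
Proof. by move=> hz; rewrite -exprD -(expr_mod (a + b)%N hz). Qed.

Lemma geo_sum (z : K) : z ^+ N = 1 ->
  \sum_(a < N) z ^+ a = if z == 1 then N%:R else 0.
Proof.
move=> hz; case: eqP => [->|/eqP z1].
  by rewrite (eq_bigr (fun _ => 1)) => [|a _]; rewrite ?expr1n // sumr_const card_ord.
have := subrX1 z N; rewrite hz subrr => /esym /eqP; rewrite mulf_eq0 subr_eq0 (negbTE z1) /=.
by move/eqP.
Qed.

Variable xi : K.
Hypothesis hxi : N.-primitive_root xi.
Hypothesis hN : N%:R != 0 :> K.

Lemma xiN : xi ^+ N = 1.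
Proof. by apply/eqP; rewrite -(prim_order_dvd hxi). Qed.
Lemma xi_neq0 : xi != 0.
Proof. by apply/eqP => x0; have := xiN; rewrite x0 expr0n /= => /eqP; rewrite eq_sym oner_eq0. Qed.
Lemma xikN k : (xi ^+ k) ^+ N = 1.
Proof. by rewrite -exprM mulnC exprM xiN expr1n. Qed.
Lemma xiVkN k : (xi^-1 ^+ k) ^+ N = 1.
Proof. by rewrite -exprM mulnC exprM exprVn xiN invr1 expr1n. Qed.

Lemma xi_eq (i j : I) : (xi ^+ i == xi ^+ j) = (i == j).
Proof. by rewrite (eq_prim_root_expr hxi) !modn_small. Qed.

Definition fid (i : I) : SKT := @fidem K N R xi i.
Local Notation c := (N%:R^-1 : K).

Lemma fidE i k : fid i k = (c * (xi ^+ i) ^+ k) *: 1.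
Proof. by rewrite /fid /fidem ffunE -exprM. Qed.

Lemma sc1l (a b : K) (x : R) : (a *: 1) * (b *: x) = (a * b) *: x.
Proof. by rewrite -scalerAl mul1r scalerA. Qed.
Lemma sc1r (a : K) (x : R) : x * (a *: 1) = a *: x.
Proof. by rewrite -scalerAr mulr1. Qed.

Lemma zN_neq0 (z : K) : z ^+ N = 1 -> z != 0.
Proof. by move=> hz; apply/eqP => z0; move: hz; rewrite z0 expr0n /= => /eqP; rewrite eq_sym oner_eq0. Qed.

Lemma ZexpB (z : K) (k a : I) : z ^+ N = 1 -> z ^+ (k - a)%R = z ^+ k / z ^+ a.
Proof.
move=> hz; have nz : z ^+ a != 0 by rewrite expf_neq0 // zN_neq0.
by rewrite -{2}(subrK a k) (Zexp (k - a) a hz) mulfK.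
Qed.

Lemma ratio_eq1 (i j : I) : (xi ^+ i / xi ^+ j == 1) = (i == j).
Proof.
have nz : xi ^+ j != 0 by rewrite expf_neq0 // xi_neq0.
case: (eqVneq i j) => [->|ij]; first by rewrite divff // eqxx.
apply/negbTE; apply: contra ij => /eqP h; rewrite -xi_eq.
by rewrite -(divfK nz (xi ^+ i)) h mul1r.
Qed.

Lemma ratioN (i j : I) : (xi ^+ i / xi ^+ j) ^+ N = 1.
Proof. by rewrite expr_div_n xikN xikN divr1. Qed.

Lemma fid_mul i j : fid i * fid j = if i == j then fid i else 0.
Proof.
apply/ffunP => k; rewrite mulSKE.
under eq_bigr => a _ do rewrite !fidE iterZr iter1r sc1l (ZexpB _ _ (xikN j)).
rewrite -scaler_suml.
rewrite (eq_bigr (fun a : I => c * c * (xi ^+ j) ^+ k * (xi ^+ i / xi ^+ j) ^+ a)) => [|a _]; last first.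
  have nz : (xi ^+ j) ^+ a != 0 by rewrite !expf_neq0 // xi_neq0.
  by rewrite expr_div_n; field; rewrite nz /= -(natrD K 2 p).
set C := (c * c * (xi ^+ j) ^+ k); set r := xi ^+ i / xi ^+ j.
have -> : \sum_(a < N) C * r ^+ a = C * \sum_(a < N) r ^+ a by rewrite mulr_sumr.
rewrite geo_sum ?ratioN // ratio_eq1 /C.
case: eqP => [->|_]; last by rewrite mulr0 scale0r ffunE.
rewrite fidE; congr (_ *: _); by field; rewrite -(natrD K 2 p).
Qed.

Lemma xiC (i k : I) : (xi ^+ i) ^+ k = (xi ^+ k) ^+ i.
Proof. by rewrite -!exprM mulnC. Qed.

Lemma fid_sum : \sum_(i < N) fid i = 1.
Proof.
apply/ffunP => k; rewrite sum_ffunE oneSKE.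
under eq_bigr => i _ do rewrite fidE xiC.
rewrite -scaler_suml -mulr_sumr geo_sum ?xikN //.
have -> : (xi ^+ k == 1) = (k == 0) by rewrite -(xi_eq k 0) expr0.
by case: (k == 0); rewrite ?mulr0 ?scale0r // mulVf // scale1r.
Qed.

Lemma fsumE : (fsum N R xi : SKT) = 1.
Proof. by rewrite -fid_sum. Qed.

Lemma mul_sofr (x : SKT) r k : (x * sof r) k = x k * iter k s r.
Proof.
rewrite mulSKE (bigD1 k) //= big1 => [|a ak]; first by rewrite subrr sofE eqxx addr0.
by rewrite sofE subr_eq0 eq_sym (negbTE ak) iter0r mulr0.
Qed.

Lemma ordS1 (i : I) : ordS i = (i + 1)%R.
Proof. exact: (esym (@add_Zp_1 p.+2 i)). Qed.

Lemma fid_u (u : R) : s u = xi *: u -> forall i, fid i * sof u = sof u * fid (ordS i).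
Proof.
move=> hu i; apply/ffunP => k; rewrite mul_sofr sof_mull (iter_eig _ hu) !fidE sc1l sc1r.
by rewrite ordS1 xiC [(xi ^+ (i + 1)%R) ^+ k]xiC (Zexp _ _ (xikN k)) expr1 mulrA.
Qed.

Lemma fid_d (d : R) : s d = xi^-1 *: d -> forall i, sof d * fid i = fid (ordS i) * sof d.
Proof.
move=> hd i; apply/ffunP => k; rewrite mul_sofr sof_mull (iter_eig _ hd) !fidE sc1l sc1r.
congr (_ *: _); rewrite ordS1 xiC [(xi ^+ (i + 1)%R) ^+ k]xiC (Zexp _ _ (xikN k)) expr1.
have nz : xi ^+ k != 0 by rewrite expf_neq0 // xi_neq0.
by rewrite exprVn -!mulrA mulfV // mulr1.
Qed.

Lemma dl_fid : dl = \sum_(i < N) xi^-1 ^+ i *: fid i.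
Proof.
apply/ffunP => k; rewrite sum_ffunE /dl /delta ffunE.
under eq_bigr => i _ do rewrite ffunE fidE scalerA xiC mulrCA -exprMn [xi^-1 * _]mulrC.
rewrite -scaler_suml.
have -> : \sum_(i < N) c * (xi ^+ k / xi) ^+ i = c * \sum_(i < N) (xi ^+ k / xi) ^+ i by rewrite mulr_sumr.
rewrite geo_sum; last by rewrite expr_div_n xikN xiN divr1.
have -> : (xi ^+ k / xi == 1) = (k == 1) by rewrite -(ratio_eq1 k 1) expr1.
by case: (k == 1); rewrite ?mulr0 ?scale0r // mulVf // scale1r.
Qed.

Lemma sofM a b : sof (a * b) = sof a * sof b.
Proof. exact: sof_mm.2. Qed.
Lemma sofN a : sof (- a) = - sof a.
Proof. by apply/ffunP => k; rewrite /sof /skew_of !ffunE; case: (_ == _); rewrite ?oppr0. Qed.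

Lemma tensE r : (skew_tens s r (fsum N R xi) : SKT) = sof r.
Proof.
rewrite /skew_tens; change (sof r * (fsum N R xi : SKT) = sof r).
by rewrite fsumE mulr1.
Qed.

Lemma FF j : fid j * fid j = fid j.
Proof. by rewrite fid_mul eqxx. Qed.
Lemma FFX (X : SKT) j : X * fid j * fid j = X * fid j.
Proof. by rewrite -mulrA FF. Qed.

Section UD.
Variables (u d : R).
Hypotheses (hu : s u = xi *: u) (hd : s d = xi^-1 *: d).
Lemma FU j : fid j * sof u = sof u * fid (ordS j).
Proof. exact: fid_u. Qed.
Lemma FD j : fid j * sof d = sof d * fid (ord_pred j).
Proof. by rewrite -{1}(ord_predK j) -fid_d. Qed.
Lemma FUX (X : SKT) j : X * fid j * sof u = X * sof u * fid (ordS j).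
Proof. by rewrite -mulrA FU mulrA. Qed.
Lemma FDX (X : SKT) j : X * fid j * sof d = X * sof d * fid (ord_pred j).
Proof. by rewrite -mulrA FD mulrA. Qed.
End UD.
End SofM.

Section HF.
Variables (K : fieldType) (n : nat) (A : algType K) (alpha beta : 'I_n -> K).
Variables (E U D : 'I_n -> A).
Hypothesis hr : H_rels alpha beta E U D.
Local Notation pr := (@ord_pred n).
Local Notation sc := (@ordS n).

Lemma EE i j : E i * E j = if i == j then E i else 0.
Proof. by case: hr. Qed.
Lemma Esum : \sum_i E i = 1.
Proof. by case: hr. Qed.
Lemma Ueq i : U i = E i * U i * E (sc i).
Proof. by case: hr. Qed.
Lemma Deq i : D i = E (sc i) * D i * E i.
Proof. by case: hr. Qed.

Lemma UE j i : U j * E i = if sc j == i then U j else 0.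
Proof.
rewrite {1}Ueq -mulrA EE; case: (eqVneq (sc j) i) => [_|_]; last by rewrite mulr0.
by rewrite -Ueq.
Qed.
Lemma EU i j : E i * U j = if i == j then U j else 0.
Proof.
rewrite {1}Ueq !mulrA EE; case: (eqVneq i j) => [->|_]; last by rewrite !mul0r.
by rewrite -Ueq.
Qed.
Lemma DE j i : D j * E i = if j == i then D j else 0.
Proof.
rewrite {1}Deq -mulrA EE; case: (eqVneq j i) => [->|_]; last by rewrite mulr0.
by rewrite -Deq.
Qed.
Lemma ED i j : E i * D j = if i == sc j then D j else 0.
Proof.
rewrite {1}Deq !mulrA EE; case: (eqVneq i (sc j)) => [->|_]; last by rewrite !mul0r.
by rewrite -Deq.
Qed.

Lemma scE (i j : 'I_n) : (sc j == i) = (j == pr i).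
Proof. by rewrite -(inj_eq (@ordS_inj _) j (pr i)) ord_predK. Qed.

Definition SU := \sum_i U i.
Definition SD := \sum_i D i.

Lemma SU_E i : SU * E i = U (pr i).
Proof.
rewrite /SU mulr_suml (bigD1 (pr i)) //= big1 => [|j ji].
  by rewrite UE ord_predK eqxx addr0.
by rewrite UE scE (negbTE ji).
Qed.
Lemma SD_E i : SD * E i = D i.
Proof.
rewrite /SD mulr_suml (bigD1 i) //= big1 => [|j ji]; first by rewrite DE eqxx addr0.
by rewrite DE (negbTE ji).
Qed.
Lemma E_SU i : E i * SU = U i.
Proof.
rewrite /SU mulr_sumr (bigD1 i) //= big1 => [|j ji]; first by rewrite EU eqxx addr0.
by rewrite EU eq_sym (negbTE ji).
Qed.
Lemma E_SD i : E i * SD = D (pr i).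
Proof.
rewrite /SD mulr_sumr (bigD1 (pr i)) //= big1 => [|j ji].
  by rewrite ED ord_predK eqxx addr0.
by rewrite ED eq_sym scE (negbTE ji).
Qed.

Lemma EUj j : E j * U j = U j. Proof. by rewrite EU eqxx. Qed.
Lemma EDj j : E (sc j) * D j = D j. Proof. by rewrite ED eqxx. Qed.

Lemma SD_U j : SD * U j = D j * U j.
Proof. by rewrite -{1}EUj mulrA SD_E. Qed.
Lemma SU_U j : SU * U j = U (pr j) * U j.
Proof. by rewrite -{1}EUj mulrA SU_E. Qed.
Lemma SU_D j : SU * D j = U j * D j.
Proof. by rewrite -{1}EDj mulrA SU_E ordSK. Qed.
Lemma SD_D j : SD * D j = D (sc j) * D j.
Proof. by rewrite -{1}EDj mulrA SD_E. Qed.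

Lemma splitE (X : A) : X = \sum_i X * E i.
Proof. by rewrite -mulr_sumr Esum mulr1. Qed.

Lemma H_R_rels : alpha =1 (fun _ => 0) -> beta =1 (fun _ => -1) -> R_rels SU SD.
Proof.
move=> ha hb; case: hr => _ _ _ _ rel.
split; rewrite [LHS]splitE big1 // => i _; rewrite mulrDl.
- have h1 : SD * SD * SU * E i = D i * D (pr i) * U (pr i).
    by rewrite -mulrA SU_E -mulrA SD_U mulrA SD_D ord_predK.
  have h2 : SU * SD * SD * E i = U (sc i) * D (sc i) * D i.
    by rewrite -mulrA SD_E -mulrA SD_D mulrA SU_D.
  by rewrite h1 h2 (proj2 (rel i)) ha hb scale0r add0r scaleN1r addNr.
- have h1 : SD * SU * SU * E i = D (pr (pr i)) * U (pr (pr i)) * U (pr i).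
    by rewrite -mulrA SU_E -mulrA SU_U mulrA SD_U.
  have h2 : SU * SU * SD * E i = U (pr i) * U i * D i.
    by rewrite -mulrA SD_E -mulrA SU_D mulrA SU_U.
  by rewrite h1 h2 (proj1 (rel (pr i))) ha hb ord_predK scale0r add0r scaleN1r addNr.
Qed.

Lemma diagM (a b : 'I_n -> K) :
  (\sum_i a i *: E i) * (\sum_i b i *: E i) = \sum_i (a i * b i) *: E i.
Proof.
rewrite mulr_suml; apply: eq_bigr => i _; rewrite mulr_sumr (bigD1 i) //= big1 => [|j ji].
  by rewrite -scalerAl -scalerAr EE eqxx scalerA addr0.
by rewrite -scalerAl -scalerAr EE eq_sym (negbTE ji) !scaler0.
Qed.

Lemma diagX (a : 'I_n -> K) m : (\sum_i a i *: E i) ^+ m = \sum_i (a i ^+ m) *: E i.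
Proof.
elim: m => [|m IH]; first by rewrite expr0 -Esum; apply: eq_bigr => i _; rewrite scale1r.
by rewrite exprS IH diagM; apply: eq_bigr => i _; rewrite exprS.
Qed.

Lemma diagEr (a : 'I_n -> K) j : (\sum_i a i *: E i) * E j = a j *: E j.
Proof.
rewrite mulr_suml (bigD1 j) //= big1 => [|i ij]; first by rewrite -scalerAl EE eqxx addr0.
by rewrite -scalerAl EE (negbTE ij) scaler0.
Qed.
Lemma diagEl (a : 'I_n -> K) j : E j * (\sum_i a i *: E i) = a j *: E j.
Proof.
rewrite mulr_sumr (bigD1 j) //= big1 => [|i ij]; first by rewrite -scalerAr EE eqxx addr0.
by rewrite -scalerAr EE eq_sym (negbTE ij) scaler0.
Qed.

Lemma GUG (a b : 'I_n -> K) j :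
  (\sum_i a i *: E i) * U j * (\sum_i b i *: E i) = (a j * b (sc j)) *: U j.
Proof.
by rewrite {1}Ueq !mulrA diagEr -!mulrA diagEl -scalerAr -scalerAl -scalerAr scalerA mulrA -Ueq.
Qed.
Lemma GDG (a b : 'I_n -> K) j :
  (\sum_i a i *: E i) * D j * (\sum_i b i *: E i) = (a (sc j) * b j) *: D j.
Proof.
by rewrite {1}Deq !mulrA diagEr -!mulrA diagEl -scalerAr -scalerAl -scalerAr scalerA mulrA -Deq.
Qed.
End HF.

Section Psi.
Variables (K : fieldType) (p : nat) (R : algType K) (s : {lrmorphism R -> R}).
Hypothesis s_n : forall r, iter p.+2 s r = r.
Local Notation N := p.+2.
Local Notation I := 'I_p.+2.
Local Notation SKT := (@SK K p R s s_n).
Variables (A : algType K) (psiR : {lrmorphism R -> A}) (G : A).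
Hypotheses (hG : G ^+ N = 1) (hGc : forall r, G * psiR r = psiR (s r) * G).

Definition psi (x : SKT) : A := \sum_(j < N) psiR (x j) * G ^+ j.

Lemma GX a r : G ^+ a * psiR r = psiR (iter a s r) * G ^+ a.
Proof.
elim: a => [|a IH]; first by rewrite expr0 mul1r mulr1.
by rewrite exprS -mulrA IH mulrA hGc -mulrA -exprS.
Qed.

Lemma addsub (a b : I) : (a + b) - a = b.
Proof. by rewrite addrAC subrr add0r. Qed.

Lemma GexpZ (a b : I) : G ^+ (a + b)%R = G ^+ a * G ^+ b.
Proof. by rewrite -exprD -(expr_mod (a + b)%N hG). Qed.

Lemma psi_mm : monoid_morphism psi.
Proof.
split.
  rewrite /psi (bigD1 ord0) //= big1 => [|j j0].
    by rewrite oneSKE eqxx rmorph1 expr0 mulr1 addr0.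
  by rewrite oneSKE (negbTE j0) raddf0 mul0r.
move=> x y; rewrite /psi.
under eq_bigr => k _ do rewrite mulSKE rmorph_sum mulr_suml.
rewrite exchange_big /= mulr_suml; apply: eq_bigr => a _.
rewrite mulr_sumr (reindex_inj (addrI a)) /=; apply: eq_bigr => b _.
rewrite addsub rmorphM GexpZ [RHS]mulrA -[_ * G ^+ a * psiR (y b)]mulrA GX.
by rewrite !mulrA.
Qed.

Lemma psi_lin : linear psi.
Proof.
move=> c x y; rewrite /psi scaler_sumr -big_split /=; apply: eq_bigr => j _.
by rewrite !ffunE linearP mulrDl scalerAl.
Qed.

Definition psiL : {lrmorphism SKT -> A} :=
  HB.pack psi (GRing.isMonoidMorphism.Build _ _ _ psi_mm)
    (GRing.isLinear.Build K SKT A *:%R _ psi_lin).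
Lemma psiLE x : psiL x = psi x. Proof. by []. Qed.

Lemma psi_sof r : psi (sof s_n r) = psiR r.
Proof.
rewrite /psi (bigD1 ord0) //= big1 => [|j j0].
  by rewrite sofE eqxx expr0 mulr1 addr0.
by rewrite sofE (negbTE j0) raddf0 mul0r.
Qed.

Lemma psi_dl : psi (dl s_n) = G.
Proof.
rewrite /psi (bigD1 1) //= big1 => [|j j0].
  by rewrite /dl /delta ffunE eqxx rmorph1 mul1r expr1 addr0.
by rewrite /dl /delta ffunE (negbTE j0) raddf0 mul0r.
Qed.
End Psi.

Section HX.
Variables (K : fieldType) (p : nat) (A : algType K) (alpha beta : 'I_p.+2 -> K).
Variables (E U D : 'I_p.+2 -> A).
Hypothesis hr : H_rels alpha beta E U D.
Variable xi : K.
Hypotheses (hxi : (p.+2).-primitive_root xi) (hN : (p.+2)%:R != 0 :> K).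

Lemma fourier (i : 'I_p.+2) :
  \sum_(j < p.+2) ((p.+2)%:R^-1 * (xi ^+ i) ^+ j) *: (\sum_(k : 'I_p.+2) xi^-1 ^+ k *: E k) ^+ j = E i.
Proof.
have step (j : 'I_p.+2) : ((p.+2)%:R^-1 * (xi ^+ i) ^+ j) *: (\sum_(k : 'I_p.+2) xi^-1 ^+ k *: E k) ^+ j
   = \sum_(k : 'I_p.+2) ((p.+2)%:R^-1 * (xi ^+ i / xi ^+ k) ^+ j) *: E k.
  rewrite (diagX hr) scaler_sumr; apply: eq_bigr => k _; rewrite scalerA; congr (_ *: _).
  by rewrite !exprVn expr_div_n mulrA.
rewrite (eq_bigr _ (fun j _ => step j)) exchange_big /=.
rewrite (bigD1 i) //= [X in _ + X]big1 => [|k ki].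
  rewrite -scaler_suml -mulr_sumr geo_sum ?(ratioN hxi) // (ratio_eq1 hxi) eqxx.
  by rewrite mulVf // scale1r addr0.
rewrite -scaler_suml -mulr_sumr geo_sum ?(ratioN hxi) // (ratio_eq1 hxi) eq_sym (negbTE ki).
by rewrite mulr0 scale0r.
Qed.
End HX.

Theorem lemma3p4 (K : closedFieldType) (charK0 : [pchar K] =i pred0)
  (n : nat) (hn : (2 <= n)%N)
  (R : algType K) (u d : R) (hR : presents_R u d)
  (xi : K) (hxi : n.-primitive_root xi)
  (g : {lrmorphism R -> R}) (hgu : g u = xi *: u) (hgd : g d = xi^-1 *: d)
  (H : algType K) (e uu dd : 'I_n -> H)
  (hH : presents_H (fun _ : 'I_n => 0) (fun _ : 'I_n => -1) e uu dd) :
  let f_ := @fidem K n R xi in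
  let f := fsum n R xi in
  let mul := @skew_mul K n R g in
  exists phi : H -> {ffun 'I_n -> R},
    [/\ (forall a b, phi (a + b) = phi a + phi b)
        /\ (forall (c : K) a, phi (c *: a) = c *: phi a),
        (forall a b, phi (a * b) = mul (phi a) (phi b)) /\ phi 1 = f,
        (forall i, [/\ phi (e i) = f_ i,
                       phi (uu i) = mul (f_ i) (skew_tens g u f) &
                       phi (dd i) = mul (skew_tens g d f) (f_ i)]),
        injective phi &
        (forall x, inB g xi x <-> exists h, phi h = x)].
Proof.
case: n hn hxi e uu dd hH => [|[|p]] // _ hxi e uu dd hH.
move=> f_ f mul; rewrite {}/f_ {}/f {}/mul.
have hN : (p.+2)%:R != 0 :> K := prim_root_natf_neq0 hxi.
case: hR => relR univR.
have s_n : forall r, iter p.+2 g r = r.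
  have [_ uq] := univR R u d relR.
  move=> r; apply: (uq (iterfL g p.+2) (iterfL g 0)) => //.
  - by rewrite iterfLE (iter_eig _ hgu) (prim_expr_order hxi) scale1r.
  - by rewrite iterfLE (iter_eig _ hgd) exprVn (prim_expr_order hxi) invr1 scale1r.
pose SKT := SK s_n.
pose F := fid s_n xi.
pose UU i : SKT := F i * sof s_n u.
pose DD i : SKT := sof s_n d * F i.
have HR : H_rels (fun _ : 'I_p.+2 => 0) (fun _ => -1) F UU DD.
  split.
  - exact: fid_mul.
  - exact: fid_sum.
  - move=> i; rewrite /UU !mulrA (FF s_n hxi hN) -mulrA -(FU s_n hxi hgu) mulrA.
    by rewrite (FF s_n hxi hN).
  - move=> i; rewrite /DD !mulrA (FFX hxi hN) (FD s_n hxi hgd) ordSK.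
    by rewrite (FFX hxi hN).
  - move=> i; rewrite !scale0r !add0r !scaleN1r /UU /DD !mulrA.
    rewrite !(FUX hxi hgu, FDX hxi hgd, FFX hxi hN, FU s_n hxi hgu, FD s_n hxi hgd, ordSK, ord_predK).
    rewrite -!(sofM s_n).
    have r1 : d * u * u = - (u * u * d) by apply/eqP; rewrite -addr_eq0 (proj2 relR).
    have r2 : d * d * u = - (u * d * d) by apply/eqP; rewrite -addr_eq0 (proj1 relR).
    by rewrite r1 r2 !sofN !mulNr.
case: hH => hrels univH.
have [[phi hphi] _] := univH SKT F UU DD HR.
have [_ uqHH] := univH H e uu dd hrels.
have [[psiR [hpu hpd]] uqR] :=
  univR H (SU uu) (SD dd) (H_R_rels hrels (fun _ => erefl) (fun _ => erefl)).
pose G := \sum_(i : 'I_p.+2) xi^-1 ^+ i *: e i.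
pose G' := \sum_(i : 'I_p.+2) xi ^+ i *: e i.
have xinz : forall k, xi ^+ k != 0 by move=> k; rewrite expf_neq0 // (xi_neq0 hxi).
have hGG' : G * G' = 1.
  rewrite (diagM hrels) -(Esum hrels); apply: eq_bigr => i _.
  by rewrite exprVn mulVf ?scale1r.
have hG'G : G' * G = 1.
  rewrite (diagM hrels) -(Esum hrels); apply: eq_bigr => i _.
  by rewrite exprVn mulfV ?scale1r.
have hG : G ^+ p.+2 = 1.
  rewrite (diagX hrels) -(Esum hrels); apply: eq_bigr => i _.
  by rewrite (xiVkN hxi) scale1r.
have xiVN : xi^-1 ^+ p.+2 = 1 by rewrite exprVn (xiN hxi) invr1.
have psiRZ c r : psiR (c *: r) = c *: psiR r.
  by have := linearP psiR c r 0; rewrite !addr0 raddf0 addr0.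
have hconj : forall r, G * psiR r * G' = psiR (g r).
  have [_ uqR'] := univR H (psiR (g u)) (psiR (g d)) (rels_morph (compL psiR g) relR).
  move=> r; apply: (uqR' (compL (conjfL hGG' hG'G) psiR) (compL psiR g)) => //.
  - rewrite compLE conjfLE hpu hgu psiRZ hpu /SU [X in X * G']mulr_sumr mulr_suml scaler_sumr.
    apply: eq_bigr => i _; rewrite (GUG hrels); congr (_ *: _).
    by rewrite (ordS1 i) (Zexp _ _ (xiN hxi)) expr1 mulrA exprVn mulVf // mul1r.
  - rewrite compLE conjfLE hpd hgd psiRZ hpd /SD [X in X * G']mulr_sumr mulr_suml scaler_sumr.
    apply: eq_bigr => i _; rewrite (GDG hrels); congr (_ *: _).
    by rewrite (ordS1 i) (Zexp _ _ xiVN) expr1 mulrAC exprVn mulVf // mul1r.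
have hGc : forall r, G * psiR r = psiR (g r) * G.
  by move=> r; rewrite -hconj -[_ * G' * G]mulrA hG'G mulr1.
pose ps := psiL s_n hG hGc.
have psi_fid : forall i, psi psiR G (F i) = e i.
  move=> i; rewrite /psi -(fourier hrels hxi hN i); apply: eq_bigr => j _.
  by rewrite (fidE s_n xi) psiRZ rmorph1 -scalerAl mul1r.
have psiphi : forall h, ps (phi h) = h.
  move=> h; apply: (uqHH (compL ps phi) (idL H)) => // i; split; rewrite compLE.
  - by case: (hphi i) => -> _ _; exact: psi_fid.
  - case: (hphi i) => _ -> _; rewrite /UU rmorphM.
    change (psi psiR G (F i) * psi psiR G (sof s_n u) = uu i).
    rewrite psi_fid psi_sof hpu.
    exact: (E_SU hrels).
  - case: (hphi i) => _ _ ->; rewrite /DD rmorphM.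
    change (psi psiR G (sof s_n d) * psi psiR G (F i) = dd i).
    rewrite psi_fid psi_sof hpd.
    exact: (SD_E hrels).
have phipsiR : forall r, phi (psiR r) = sof s_n r.
  have [_ uqS] := univR SKT (sof s_n u) (sof s_n d) (rels_morph (sofL s_n) relR).
  move=> r; apply: (uqS (compL phi psiR) (sofL s_n)) => //; rewrite compLE.
  - rewrite hpu /SU rmorph_sum.
    rewrite (eq_bigr (fun i => UU i)); last by move=> i _; case: (hphi i) => _ h _; exact: h.
    rewrite /UU.
    by rewrite -mulr_suml (fid_sum s_n hxi hN) mul1r.
  - rewrite hpd /SD rmorph_sum.
    rewrite (eq_bigr (fun i => DD i)); last by move=> i _; case: (hphi i) => _ _ h; exact: h.
    rewrite /DD.
    by rewrite -mulr_sumr (fid_sum s_n hxi hN) mulr1.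
have phiZ c h : phi (c *: h) = c *: phi h.
  by have := linearP phi c h 0; rewrite !addr0 raddf0 addr0.
have phiG : phi G = dl s_n.
  rewrite (dl_fid s_n hxi hN) rmorph_sum; apply: eq_bigr => i _.
  transitivity (xi^-1 ^+ i *: phi (e i)); first exact: phiZ.
  by case: (hphi i) => h _ _; rewrite h.
have phipsi : forall x, phi (ps x) = x.
  move=> x; rewrite psiLE /psi rmorph_sum [RHS](SK_dec x); apply: eq_bigr => j _.
  apply: (etrans (rmorphM phi _ _)); congr (_ * _); first exact: phipsiR.
  by apply: (etrans (rmorphXn phi _ _)); congr (_ ^+ _).
exists (fun h => phi h); split.
- split => [a b|c a]; [exact: (rmorphD phi a b) | exact: phiZ].
- split => [a b|]; first exact: (rmorphM phi a b).
  transitivity (1 : SKT); first exact: (rmorph1 phi).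
  exact: esym (fsumE s_n hxi hN).
- move=> i; case: (hphi i) => h1 h2 h3; split; first exact: h1.
  + transitivity (UU i); first exact: h2.
    rewrite /UU; change (F i * sof s_n u = F i * (skew_tens g u (fsum p.+2 R xi) : SKT)).
    by rewrite (tensE s_n hxi hN).
  + transitivity (DD i); first exact: h3.
    rewrite /DD; change (sof s_n d * F i = (skew_tens g d (fsum p.+2 R xi) : SKT) * F i).
    by rewrite (tensE s_n hxi hN).
- by move=> a b /(congr1 ps); rewrite !psiphi.
- move=> x; split=> _; first by exists (ps x); exact: phipsi.
  exists x; change (x = (fsum p.+2 R xi : SKT) * ((x : SKT) * (fsum p.+2 R xi : SKT))).
  by rewrite (fsumE s_n hxi hN) mul1r mulr1.
Qed.
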